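(* Let $\{(\mathbf{x}_i,y_i)\}_{i=1}^n\subset\mathbb{R}^d\times\mathbb{R}$ with $\|\mathbf{x}_i\|=1$ and $|y_i|=O(1)$, and suppose $\lambda_0:=\lambda_{\min}(\mathbf{H}^\infty)>0$, where $\mathbf{H}^\infty_{ij}=\mathbf{x}_i^\top\mathbf{x}_j\frac{\pi-\arccos(\mathbf{x}_i^\top\mathbf{x}_j)}{2\pi}$. Let $\mathbf{W}=(\mathbf{w}_1,\dots,\mathbf{w}_m)$ with $\mathbf{w}_r\in\mathbb{R}^d$, $a_r\in\{-1,+1\}$, $u_i=\frac{1}{\sqrt m}\sum_{r=1}^m a_r\sigma(\mathbf{w}_r^\top\mathbf{x}_i)$ with $\sigma(z)=\max(z,0)$, $\mathbf{u}=(u_1,\dots,u_n)^\top$, $\mathbf{y}=(y_1,\dots,y_n)^\top$, $L(\mathbf{W})=\frac12\|\mathbf{u}-\mathbf{y}\|^2$, and let $\mathbf{H}\in\mathbb{R}^{n\times n}$ be given by $\mathbf{H}_{ij}=\frac1m\sum_{r=1}^m\mathbf{x}_i^\top\mathbf{x}_j\mathbb{I}\{\mathbf{w}_r^\top\mathbf{x}_i\ge0,\mathbf{w}_r^\top\mathbf{x}_j\ge0\}$. If $\lambda_{\min}(\mathbf{H})\ge\lambda_0/2$, then $$\frac{\sqrt{\lambda_0}}{\sqrt{2m}}\|\mathbf{y}-\mathbf{u}\|\le\max_{r\in[m]}\left\|\frac{\partial L(\mathbf{W})}{\partial\mathbf{w}_r}\right\|\le\frac{\sqrt n}{\sqrt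 m}\|\mathbf{y}-\mathbf{u}\|.$$
   Context: The gradient uses the convention $\frac{\partial L(\mathbf{W})}{\partial\mathbf{w}_r}=\frac{1}{\sqrt m}\sum_{i=1}^n(u_i-y_i)a_r\mathbf{x}_i\mathbb{I}\{\mathbf{w}_r^\top\mathbf{x}_i\ge0\}$. $\|\cdot\|$ is the Euclidean norm and $\lambda_{\min}$ the smallest eigenvalue. *)

(* Defs.v *)
From HB Require Import structures.
From mathcomp Require Import all_boot all_order all_algebra.
From mathcomp Require Import reals trigo.
Set Implicit Arguments. Unset Strict Implicit. Unset Printing Implicit Defensive.
Import Order.TTheory GRing.Theory Num.Theory.
Local Open Scope ring_scope.

Section Defs.
Variable R : realType.

Definition dotv k (u v : 'rV[R]_k) : R := \sum_(i < k) u 0 i * v 0 i.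
Definition enorm k (v : 'rV[R]_k) : R := Num.sqrt (dotv v v).

Definition relu (z : R) : R := Num.max z 0.

Definition ind (b : bool) : R := b%:R.

Definition is_lambda_min n (A : 'M[R]_n) (l : R) : Prop :=
  eigenvalue A l /\ forall a, eigenvalue A a -> l <= a.

Definition Hinf n d (X : 'I_n -> 'rV[R]_d) : 'M[R]_n :=
  \matrix_(i, j) (dotv (X i) (X j) * (pi - acos (dotv (X i) (X j))) / (2 * pi)).

Definition outp n d m (X : 'I_n -> 'rV[R]_d) (W : 'I_m -> 'rV[R]_d)
    (a : 'I_m -> R) : 'rV[R]_n :=
  \row_i ((Num.sqrt (m%:R))^-1 * \sum_(r < m) a r * relu (dotv (W r) (X i))).

Definition Hmat n d m (X : 'I_n -> 'rV[R]_d) (W : 'I_m -> 'rV[R]_d) : 'M[R]_n :=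
  \matrix_(i, j) ((m%:R)^-1 * \sum_(r < m)
     dotv (X i) (X j) * ind ((0 <= dotv (W r) (X i)) && (0 <= dotv (W r) (X j)))).

(* gradient dL/dw_r = 1/sqrt m sum_i (u_i - y_i) a_r x_i I{w_r^T x_i >= 0} *)
Definition gradw n d m (X : 'I_n -> 'rV[R]_d) (y : 'rV[R]_n)
    (W : 'I_m -> 'rV[R]_d) (a : 'I_m -> R) (r : 'I_m) : 'rV[R]_d :=
  (Num.sqrt (m%:R))^-1 *: \sum_(i < n)
     (((outp X W a) 0 i - y 0 i) * a r * ind (0 <= dotv (W r) (X i))) *: X i.

End Defs.

(* Main.v *)
Require Import Defs.
From HB Require Import structures.
From mathcomp Require Import all_boot all_order all_algebra.
From mathcomp Require Import reals trigo complex.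
From mathcomp Require Import ring lra.
Import Order.TTheory GRing.Theory Num.Theory.
Local Open Scope ring_scope.

Section H.
Variable R : realType.
Local Open Scope sesquilinear_scope.

Lemma dotv_ge0 k (u : 'rV[R]_k) : 0 <= dotv u u.
Proof. by apply: sumr_ge0 => i _; rewrite -expr2 sqr_ge0. Qed.

Lemma enorm_ge0 k (u : 'rV[R]_k) : 0 <= enorm u.
Proof. exact: sqrtr_ge0. Qed.

Lemma enorm_sq k (u : 'rV[R]_k) : enorm u ^+ 2 = dotv u u.
Proof. by rewrite sqr_sqrtr // dotv_ge0. Qed.

Lemma dotvZ k (c : R) (u : 'rV[R]_k) : dotv (c *: u) (c *: u) = c ^+ 2 * dotv u u.
Proof.
rewrite /dotv mulr_sumr; apply: eq_bigr => i _; rewrite !mxE; ring.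
Qed.

Lemma dotv_lin n d (c : 'I_n -> R) (X : 'I_n -> 'rV[R]_d) :
  dotv (\sum_i c i *: X i) (\sum_i c i *: X i) =
  \sum_i \sum_j c i * c j * dotv (X i) (X j).
Proof.
rewrite /dotv.
under eq_bigr do rewrite !summxE mulr_suml.
rewrite exchange_big /=; apply: eq_bigr => i _.
under eq_bigr do rewrite mulr_sumr.
rewrite exchange_big /=; apply: eq_bigr => j _.
rewrite mulr_sumr; apply: eq_bigr => k _; rewrite !mxE; ring.
Qed.

Lemma dotv_le1 k (u v : 'rV[R]_k) : dotv u u = 1 -> dotv v v = 1 ->
  `|dotv u v| <= 1.
Proof.
move=> hu hv.
have h1 : 2 * dotv u v <= dotv u u + dotv v v.
  rewrite /dotv mulr_sumr -big_split.
  apply: ler_sum => i _ /=; have := sqr_ge0 (u 0 i - v 0 i); rewrite expr2; nra.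
have h2 : - (2 * dotv u v) <= dotv u u + dotv v v.
  rewrite /dotv mulr_sumr -sumrN -big_split.
  apply: ler_sum => i _ /=; have := sqr_ge0 (u 0 i + v 0 i); rewrite expr2; nra.
rewrite hu hv in h1 h2.
rewrite ler_norml; apply/andP; split; lra.
Qed.

Lemma le_sq (x z : R) : 0 <= x -> 0 <= z -> x ^+ 2 <= z ^+ 2 -> x <= z.
Proof. by move=> hx hz; rewrite ler_sqr // nnegrE. Qed.

Lemma rayleigh n (H : 'M[R]_n) l (w : 'rV[R]_n) :
  H^T = H -> is_lambda_min H l ->
  l * (w *m w^T) 0 0 <= (w *m H *m w^T) 0 0.
Proof.
move=> Hsym [_ Hmin].
pose f := real_complex R.
have fR : forall x : R, (f x)^* = f x.
  move=> x; apply/eqP; rewrite -CrealE realE.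
  by rewrite -(rmorph0 f) !lecR -realE num_real.
pose Hc := H ^ f.
have herm : Hc \is hermsymmx.
  apply/is_hermitianmxP; rewrite expr0 scale1r.
  apply/matrixP => i j; rewrite !mxE fR.
  by rewrite -{1}Hsym mxE.
have nrm := hermitian_normalmx herm.
set P := spectralmx Hc; set D := spectral_diag Hc.
have eqH : Hc = invmx P *m diag_mx D *m P by apply/orthomx_spectralP.
have Pu : P \is unitarymx := spectral_unitarymx Hc.
have iP : invmx P = P^t* := invmx_unitary Pu.
have Dreal := hermitian_spectral_diag_real herm.
have Dge : forall k, f l <= D 0 k.
  move=> k.
  have ev : eigenvalue Hc (D 0 k).
    apply/eigenvalueP; exists (row k P).
      rewrite -row_mul {1}eqH !mulmxA mulmxV ?spectral_unit // mul1mx.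
      by rewrite !row_mul row_diag_mx -scalemxAl -rowE.
    apply/negP => /eqP r0.
    have := unitarymxP Pu => /(congr1 (row k)).
    rewrite row_mul r0 mul0mx => /rowP /(_ k); rewrite !mxE eqxx /=.
    by move=> /eqP; rewrite eq_sym oner_eq0.
  have Dk : D 0 k \is Num.real by move/mxOverP: Dreal; apply.
  have Ek : f (complex.Re (D 0 k)) = D 0 k by rewrite /f RRe_real.
  rewrite -Ek lecR; apply: Hmin.
  have := eigenvalue_map (real_complex R) H (complex.Re (D 0 k)).
  move=> <-. rewrite -[X in eigenvalue _ X]/(f (complex.Re (D 0 k))) Ek.
  exact ev.
pose wc := w ^ f.
have wcT : wc^t* = w^T ^ f.
  by apply/matrixP => i j; rewrite !mxE fR.
have mapE : forall A : 'M[R]_1, f (A 0 0) = (A ^ f) 0 0 by move=> A; rewrite mxE.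
have E1 : f ((w *m H *m w^T) 0 0) = (wc *m Hc *m wc^t*) 0 0.
  by rewrite wcT mapE !map_mxM.
have E2 : f ((w *m w^T) 0 0) = (wc *m wc^t*) 0 0.
  by rewrite wcT mapE !map_mxM.
pose z := wc *m P^t*.
have zT : z^t* = P *m wc^t*.
  by rewrite /z trmx_mul map_mxM trmxCK.
have E3 : wc *m Hc *m wc^t* = z *m diag_mx D *m z^t*.
  by rewrite eqH iP zT /z !mulmxA.
have E4 : wc *m wc^t* = z *m z^t*.
  by rewrite zT /z !mulmxA mulmxKtV.
have E0 : f (l * (w *m w^T) 0 0) = f l * f ((w *m w^T) 0 0) by exact: (rmorphM (real_complex R)).
suff key : f (l * (w *m w^T) 0 0) <= f ((w *m H *m w^T) 0 0).
  by rewrite -lecR; exact: key.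
rewrite E0 E1 E2 E3 E4; clearbody z; rewrite mul_mx_diag !mxE mulr_sumr.
apply: ler_sum => k _; rewrite !mxE.
rewrite (mulrC (z 0 k) (D 0 k)) -mulrA.
by apply: ler_wpM2r; [exact: mul_conjC_ge0 | exact: Dge].
Qed.
End H.

Lemma rayleighR (R : realType) n (H : 'M[R]_n) l (w : 'rV[R]_n) :
  H^T = H -> is_lambda_min H l ->
  l * (w *m w^T) 0 0 <= (w *m H *m w^T) 0 0.
Proof. exact: (@rayleigh R). Qed.

Theorem mainTheorem7 (R : realType) (n d m : nat)
  (X : 'I_n -> 'rV[R]_d) (y : 'rV[R]_n) (W : 'I_m -> 'rV[R]_d) (a : 'I_m -> R)
  (lambda0 : R) :
  (0 < m)%N ->
  (forall i, enorm (X i) = 1) ->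
  (forall r, a r = 1 \/ a r = -1) ->
  is_lambda_min (Hinf X) lambda0 ->
  0 < lambda0 ->
  (exists l, is_lambda_min (Hmat X W) l /\ lambda0 / 2 <= l) ->
  Num.sqrt lambda0 / Num.sqrt (2 * m%:R) * enorm (y - outp X W a)
    <= \big[Num.max/0]_(r < m) enorm (gradw X y W a r)
  /\ \big[Num.max/0]_(r < m) enorm (gradw X y W a r)
    <= Num.sqrt (n%:R) / Num.sqrt (m%:R) * enorm (y - outp X W a).
Proof.
move=> m0 hX ha _ l0 [l [Hl hl]].
set u := outp X W a.
pose e i := u 0 i - y 0 i.
pose I r i := @ind R (0 <= dotv (W r) (X i)).
pose c r i := e i * a r * I r i.
have hXX : forall i, dotv (X i) (X i) = 1.
  by move=> i; rewrite -enorm_sq hX expr1n.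
have hx : forall i j, `|dotv (X i) (X j)| <= 1.
  by move=> i j; apply: dotv_le1.
have ha2 : forall r, a r ^+ 2 = 1.
  by move=> r; case: (ha r) => ->; rewrite ?sqrrN expr1n.
have hN : dotv (y - u) (y - u) = \sum_i e i ^+ 2.
  by rewrite /dotv; apply: eq_bigr => i _; rewrite /e !mxE; ring.
have mpos : 0 < m%:R :> R by rewrite ltr0n.
have hk : (Num.sqrt m%:R)^-1 ^+ 2 = (m%:R)^-1 :> R.
  by rewrite exprVn sqr_sqrtr // ltW.
have hG : forall r, enorm (gradw X y W a r) ^+ 2 =
    (m%:R)^-1 * \sum_i \sum_j c r i * c r j * dotv (X i) (X j).
  by move=> r; rewrite enorm_sq /gradw dotvZ hk dotv_lin.
have hc2 : forall r i, c r i ^+ 2 <= e i ^+ 2.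
  move=> r i; rewrite /c !exprMn ha2 mulr1 /I /ind.
  case: (0 <= dotv (W r) (X i)) => /=; rewrite ?mulr1n ?mulr0n ?expr1n ?mulr1 //.
  by rewrite expr0n /= mulr0 sqr_ge0.
have hsym : forall A : 'I_n -> R,
    \sum_(i < n) \sum_(j < n) (A i / 2 + A j / 2) = n%:R * \sum_i A i.
  move=> A; under eq_bigr do rewrite big_split /=.
  rewrite big_split /= [X in _ + X]exchange_big /= -mulr2n.
  under eq_bigr do rewrite sumr_const card_ord.
  rewrite -sumrMnl mulr_sumr; apply: eq_bigr => i _.
  by rewrite -mulrnA -(mulr_natr (A i / 2)) natrM mulrA mulrAC divfK ?pnatr_eq0 // mulrC.
have N0 : 0 <= \sum_i e i ^+ 2 by apply: sumr_ge0 => i _; exact: sqr_ge0.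
have B0 : 0 <= Num.sqrt (n%:R) / Num.sqrt (m%:R) * enorm (y - u).
  by rewrite mulr_ge0 ?divr_ge0 ?sqrtr_ge0 ?enorm_ge0.
have up : forall r, enorm (gradw X y W a r) <=
    Num.sqrt (n%:R) / Num.sqrt (m%:R) * enorm (y - u).
  move=> r; apply: le_sq; rewrite ?enorm_ge0 //.
  rewrite hG exprMn enorm_sq hN expr_div_n !sqr_sqrtr ?ler0n //.
  rewrite [X in _ <= X]mulrAC [X in _ <= X]mulrC; apply: ler_wpM2l; first by rewrite invr_ge0 ltW.
  rewrite -hsym; apply: ler_sum => i _; apply: ler_sum => j _.
  have := hx i j; rewrite ler_norml => /andP [h1 h2].
  have := hc2 r i; have := hc2 r j.
  have := sqr_ge0 (c r i - c r j); have := sqr_ge0 (c r i + c r j).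
  move: (c r i) (c r j) (dotv (X i) (X j)) h1 h2 => ci cj x h1 h2 s1 s2 hj hi.
  rewrite !expr2 in s1 s2 hj hi *.
  have [p0|p0] := lerP 0 (ci * cj).
    have : 0 <= ci * cj * (1 - x) by apply: mulr_ge0; lra.
    nra.
  have : 0 <= - (ci * cj) * (1 + x) by apply: mulr_ge0; lra.
  nra.
set M := \big[Num.max/0]_(r < m) enorm (gradw X y W a r).
split; last by apply: bigmax_le.
have hM : forall r, enorm (gradw X y W a r) <= M by move=> r; exact: le_bigmax.
have M0 : 0 <= M by apply: le_trans (hM (Ordinal m0)); exact: enorm_ge0.
pose w := \row_i e i.
have Hsym : (Hmat X W)^T = Hmat X W.
  apply/matrixP => i j; rewrite !mxE; congr (_ * _); apply: eq_bigr => r _.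
  rewrite andbC /dotv; congr (_ * _); apply: eq_bigr => k _; exact: mulrC.
have ray := @rayleighR R _ _ _ w Hsym Hl.
have hww : (w *m w^T) 0 0 = \sum_i e i ^+ 2.
  by rewrite !mxE; apply: eq_bigr => i _; rewrite !mxE expr2.
have hsum : \sum_r enorm (gradw X y W a r) ^+ 2 = (w *m Hmat X W *m w^T) 0 0.
  have hind : forall b b', @ind R (b && b') = @ind R b * @ind R b'.
    by case; case; rewrite /ind /= ?mulr1n ?mulr0n ?mulr1 ?mulr0.
  rewrite (eq_bigr _ (fun r _ => hG r)) !mxE.
  under eq_bigr do rewrite mulr_sumr.
  rewrite exchange_big /=.
  rewrite [RHS](eq_bigr (fun j => \sum_k e k * Hmat X W k j * e j)); last first.
    by move=> j _; rewrite !mxE mulr_suml; apply: eq_bigr => k _; rewrite !mxE.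
  rewrite [RHS]exchange_big /=; apply: eq_bigr => i _.
  under eq_bigr do rewrite mulr_sumr.
  rewrite exchange_big /=; apply: eq_bigr => j _.
  rewrite mxE [in RHS]mulr_sumr.
  rewrite [in RHS]mulr_sumr [in RHS]mulr_suml; apply: eq_bigr => r _.
  have -> : c r i * c r j = e i * e j * (I r i * I r j) * a r ^+ 2 by rewrite /c; ring.
  by rewrite ha2 mulr1 /I hind; ring.
have sumM : \sum_r enorm (gradw X y W a r) ^+ 2 <= m%:R * M ^+ 2.
  have h1 : \sum_r enorm (gradw X y W a r) ^+ 2 <= \sum_(r < m) M ^+ 2.
    by apply: ler_sum => r _; rewrite ler_sqr ?nnegrE ?enorm_ge0.
  by rewrite mulr_natl; rewrite sumr_const card_ord in h1.
have key : lambda0 / 2 * \sum_i e i ^+ 2 <= m%:R * M ^+ 2.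
  apply: le_trans (ler_wpM2r N0 hl) _.
  by rewrite -hww; apply: le_trans ray _; rewrite -hsum.
apply: le_sq => //.
  by rewrite mulr_ge0 ?divr_ge0 ?sqrtr_ge0 ?enorm_ge0.
rewrite exprMn enorm_sq hN expr_div_n (sqr_sqrtr (ltW l0)) sqr_sqrtr ?mulr_ge0 ?ler0n //.
have -> : lambda0 / (2 * m%:R) * \sum_i e i ^+ 2 =
    (m%:R)^-1 * (lambda0 / 2 * \sum_i e i ^+ 2).
  by field; rewrite pnatr_eq0 -lt0n.
apply: le_trans (ler_wpM2l _ key) _; first by rewrite invr_ge0 ltW.
by rewrite mulrA mulVf ?mul1r // gt_eqF.
Qed.
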